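(* Let $0<\varepsilon<1$. Let $\mathcal C'$ be any clustering of $V$ that does not split any atom of $\mathcal K$ and such that for every $u\in V$ and every $C\in\mathcal C'$ with $K_u\subsetneq C$ we have $w(u,C)>\frac{|C|}{2}+\varepsilon w_u$. Then for every $C\in\mathcal C'$ and every $u,v\in C$, $w_u>\varepsilon w_v$.
   Context: A Correlation Clustering instance consists of a finite vertex set $V$ and a partition $E^+\uplus E^-=\binom V2$ of unordered pairs of distinct vertices into $+$edges and $-$edges. $\mathcal K$ is a partition of $V$ into atoms, and every pair of distinct vertices in a common atom is a $+$edge. For $u\in V$, $K_u$ is the atom containing $u$ and $k_u=|K_u|$. For $u,v\in V$ (possibly equal), $w_{uv}=\frac1{k_uk_v}\sum_{u'\in K_u,v'\in K_v}\mathbf 1[u'v'\text{ is a }+\text{edge or }u'=v']\in[0,1]$; for $V'\subseteq V$, $w(u,V')=\sum_{v\in V'}w_{uv}$, and $w_u=w(u,V)$. *)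

(* Defs.v *)
From HB Require Import structures.
From mathcomp Require Import all_boot all_order all_algebra.
Set Implicit Arguments. Unset Strict Implicit. Unset Printing Implicit Defensive.
Import Order.TTheory GRing.Theory Num.Theory.
Local Open Scope ring_scope.

Section CC.
Variables (R : realFieldType) (V : finType).
(* E = the +edges (a symmetric relation on V); K = the atom partition. *)
Variables (E : rel V) (K : {set {set V}}).

Definition atom (u : V) : {set V} := pblock K u.

Definition wt (u v : V) : R :=
  (#|atom u| * #|atom v|)%:R^-1 *
  \sum_(u' in atom u) \sum_(v' in atom v) ((E u' v' || (u' == v')) : nat)%:R.

Definition wset (u : V) (S : {set V}) : R := \sum_(v in S) wt u v.

Definition wdeg (u : V) : R := wset u [set: V].
End CC.

(* Main.v *)
Require Import Defs.
From HB Require Import structures.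
From mathcomp Require Import all_boot all_order all_algebra.
Import Order.TTheory GRing.Theory Num.Theory.
From mathcomp Require Import lra.
Local Open Scope ring_scope.

Section H.
Variables (R : realFieldType) (V : finType) (E : rel V) (K : {set {set V}}).
Hypothesis pK : partition K [set: V].

Lemma in_atom u : u \in atom K u.
Proof. by rewrite /atom mem_pblock (cover_partition pK) inE. Qed.

Lemma atom_pos u : (0 < #|atom K u|)%N.
Proof. by apply/card_gt0P; exists u; apply: in_atom. Qed.

Lemma wt_ge0 u v : 0 <= wt R E K u v.
Proof.
rewrite /wt mulr_ge0 // ?invr_ge0 ?ler0n //.
by apply: sumr_ge0 => i _; apply: sumr_ge0 => j _; rewrite ler0n.
Qed.

Lemma wt_le1 u v : wt R E K u v <= 1.
Proof.
rewrite /wt.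
have hp : 0 < (#|atom K u| * #|atom K v|)%:R :> R.
  by rewrite ltr0n muln_gt0 !atom_pos.
rewrite ler_pdivrMl // mulr1.
apply: (@le_trans _ _ (\sum_(u' in atom K u) \sum_(v' in atom K v) (1:R))).
  apply: ler_sum => i _; apply: ler_sum => j _.
  by rewrite -[1]/(1%:R) ler_nat leq_b1.
under eq_bigr do rewrite sumr_const.
by rewrite sumr_const -mulrnA mulnC.
Qed.

Lemma wt_uu u : 0 < wt R E K u u.
Proof.
rewrite /wt mulr_gt0 // ?invr_gt0 ?ltr0n ?muln_gt0 ?atom_pos //.
rewrite (bigD1 u) ?in_atom //= (bigD1 u) ?in_atom //= eqxx orbT.
rewrite -addrA ltr_pwDl ?ltr01 //.
apply: addr_ge0; first by apply: sumr_ge0 => j _; rewrite ler0n.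
by apply: sumr_ge0 => i _; apply: sumr_ge0 => j _; rewrite ler0n.
Qed.

Lemma wset_le u C : wset R E K u C <= wdeg R E K u.
Proof.
rewrite /wdeg /wset [X in _ <= X](bigID (fun x => x \in C)) /=.
rewrite [X in _ <= X + _](eq_bigl (fun i => i \in C)); last by move=> i; rewrite !inE.
by rewrite lerDl; apply: sumr_ge0 => i _; apply: wt_ge0.
Qed.

Lemma wset_card u C : wset R E K u C <= #|C|%:R.
Proof.
rewrite /wset (@le_trans _ _ (\sum_(i in C) (1:R))) //.
  by apply: ler_sum => i _; apply: wt_le1.
by rewrite sumr_const.
Qed.

Lemma wdeg_gt0 u : 0 < wdeg R E K u.
Proof.
rewrite /wdeg /wset (bigD1 u) //= ltr_pwDl ?wt_uu //.
by apply: sumr_ge0 => i _; apply: wt_ge0.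
Qed.

Lemma wdeg_eq u v : atom K u = atom K v -> wdeg R E K u = wdeg R E K v.
Proof.
move=> h; rewrite /wdeg /wset; apply: eq_bigr => x _.
by rewrite /wt h.
Qed.
End H.

Theorem lemma10 (R : realFieldType) (V : finType) (E : rel V)
    (K C' : {set {set V}}) (eps : R) :
  0 < eps < 1 ->
  symmetric E ->
  partition K [set: V] ->
  (forall A, A \in K -> forall x y, x \in A -> y \in A -> x != y -> E x y) ->
  partition C' [set: V] ->
  (forall A, A \in K -> exists2 C, C \in C' & A \subset C) ->
  (forall (u : V) (C : {set V}), C \in C' -> atom K u \proper C ->
      wset R E K u C > #|C|%:R / 2 + eps * wdeg R E K u) ->
  forall (C : {set V}) (u v : V), C \in C' -> u \in C -> v \in C ->
    wdeg R E K u > eps * wdeg R E K v.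
Proof.
move=> /andP[e0 e1] _ pK _ pC hK hw C u v CC uC vC.
have sub x : x \in C -> atom K x \subset C.
  move=> xC.
  have aK : atom K x \in K.
    by rewrite /atom pblock_mem // (cover_partition pK) inE.
  case: (hK _ aK) => D DC sD.
  have xD : x \in D by apply: (subsetP sD); apply: (in_atom V K pK).
  have tC : trivIset C' by case/and3P: pC.
  have -> : C = D by rewrite -(def_pblock tC CC xC) (def_pblock tC DC xD).
  exact: sD.
have tK : trivIset K by case/and3P: pK.
have same x y : x \in atom K y -> atom K x = atom K y by apply: same_pblock.
case: (eqVneq (atom K u) (atom K v)) => huv.
  rewrite (wdeg_eq R V E K u v huv) gtr_pMl ?(wdeg_gt0 R V E K pK) //.
have pu : atom K u \proper C.
  rewrite properEneq sub // andbT; apply/eqP => h; move: huv.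
  by rewrite (same v u) ?eqxx // h.
have pv : atom K v \proper C.
  rewrite properEneq sub // andbT; apply/eqP => h; move: huv.
  by rewrite (same u v) ?eqxx // h.
have h1 := hw _ _ CC pu.
have h2 := hw _ _ CC pv.
have h3 := wset_le R V E K u C.
have h4 := wset_card R V E K pK v C.
have h5 : 0 <= eps * wdeg R E K u by rewrite mulr_ge0 ?ltW ?(wdeg_gt0 R V E K pK).
have h0 : 0 <= #|C|%:R :> R by rewrite ler0n.
lra.
Qed.
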